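(* Let $S$ be a right zero semigroup or a left zero semigroup, and let $\omega$ be a weight on $S$. Then $\ell^{1}(S,\omega)$ is amenable if and only if $S$ is a singleton.
   Context: A semigroup $S$ is a left zero semigroup if $st=s$ for all $s,t\in S$, and a right zero semigroup if $st=t$ for all $s,t\in S$. A weight on $S$ is a function $\omega:S\to(0,\infty)$ with $\omega(st)\le\omega(s)\omega(t)$. The Beurling algebra $\ell^{1}(S,\omega)$ is the space of $f=\sum_s f(s)\delta_s$ with $\|f\|_\omega=\sum_s|f(s)|\omega(s)<\infty$, with convolution $\delta_s*\delta_t=\delta_{st}$. A Banach algebra $\mathcal{A}$ is amenable if for every Banach $\mathcal{A}$-bimodule $E$, every bounded derivation $\mathcal{A}\to E^*$ is inner. *)

(* Defs.v *)
From HB Require Import structures.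
From mathcomp Require Import all_boot all_order all_algebra.
From mathcomp Require Import all_classical all_reals all_analysis.
From mathcomp Require Import finmap complex.
Import numFieldTopology.Exports numFieldNormedType.Exports.
Import Order.TTheory GRing.Theory Num.Theory.

Set Implicit Arguments.
Unset Strict Implicit.
Unset Printing Implicit Defensive.

Local Open Scope ring_scope.

(** The complex numbers over a real field, as a numFieldType (so that the
    normed-module structure of mathcomp-analysis applies). *)
Definition Cplx (R : rcfType) : numFieldType := R[i].

(** Unordered (unconditional) sums of families indexed by a choiceType:
    limit of finite partial sums along the net of finite subsets. *)
Definition totally {I : choiceType} : set_system {fset I} :=
  filter_from setT (fun A : {fset I} => (fun B : {fset I} => is_true (A `<=` B)%fset)).

Definition partial_sum {I : choiceType} {V : zmodType}
  (x : I -> V) (A : {fset I}) : V := \sum_(i <- A) x i.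

Definition usum {I : choiceType} {K : numFieldType} {V : normedModType K}
  (x : I -> V) : V := lim (fmap (partial_sum x) totally).

Section Semigroups.
Variables (S : choiceType) (op : S -> S -> S).

Definition left_zero_sg := forall s t, op s t = s.
Definition right_zero_sg := forall s t, op s t = t.

Definition is_weight {R : realType} (w : S -> R) :=
  (forall s, 0 < w s) /\ (forall s t, w (op s t) <= w s * w t).
End Semigroups.

Section Beurling.
Variables (K : numFieldType) (S : choiceType) (op : S -> S -> S) (w : S -> K).

Definition in_l1 (f : S -> K) :=
  exists M : K, forall A : {fset S}, \sum_(i <- A) `|f i| * w i <= M.

Definition l1norm (f : S -> K) : K := usum (fun s => `|f s| * w s).

(** convolution: (f * g)(u) = sum_{(s,t) : st = u} f(s) g(t),
    i.e. the bilinear extension of delta_s * delta_t = delta_{st} *)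
Definition conv (f g : S -> K) : S -> K :=
  fun u => usum (fun p : S * S => if op p.1 p.2 == u then f p.1 * g p.2 else 0).

Definition addf (f g : S -> K) : S -> K := fun s => f s + g s.
Definition scalef (c : K) (f : S -> K) : S -> K := fun s => c * f s.

(** Banach l^1(S,w)-bimodule structure on a Banach space E:
    la f x = f . x, ra x f = x . f *)
Record banach_bimodule (E : completeNormedModType K)
  (la : (S -> K) -> E -> E) (ra : E -> (S -> K) -> E) : Prop := {
  la_addl : forall f g x, in_l1 f -> in_l1 g -> la (addf f g) x = la f x + la g x;
  la_scalel : forall c f x, in_l1 f -> la (scalef c f) x = c *: la f x;
  la_addr : forall f x y, in_l1 f -> la f (x + y) = la f x + la f y;
  la_scaler : forall c f x, in_l1 f -> la f (c *: x) = c *: la f x;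
  ra_addr : forall f g x, in_l1 f -> in_l1 g -> ra x (addf f g) = ra x f + ra x g;
  ra_scaler : forall c f x, in_l1 f -> ra x (scalef c f) = c *: ra x f;
  ra_addl : forall f x y, in_l1 f -> ra (x + y) f = ra x f + ra y f;
  ra_scalel : forall c f x, in_l1 f -> ra (c *: x) f = c *: ra x f;
  la_assoc : forall f g x, in_l1 f -> in_l1 g -> la (conv f g) x = la f (la g x);
  ra_assoc : forall f g x, in_l1 f -> in_l1 g -> ra x (conv f g) = ra (ra x f) g;
  lra_assoc : forall f g x, in_l1 f -> in_l1 g -> la f (ra x g) = ra (la f x) g;
  la_bounded : exists C : K, forall f x, in_l1 f -> `|la f x| <= C * l1norm f * `|x|;
  ra_bounded : exists C : K, forall f x, in_l1 f -> `|ra x f| <= C * l1norm f * `|x|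
}.

(** A bounded derivation D : l^1(S,w) -> E^* (D f is the functional D f : E -> K).
    The dual module actions are (f . phi)(x) = phi (x . f) and
    (phi . f)(x) = phi (f . x). *)
Record bounded_derivation (E : completeNormedModType K)
  (la : (S -> K) -> E -> E) (ra : E -> (S -> K) -> E) (D : (S -> K) -> E -> K) : Prop := {
  D_addr : forall f x y, in_l1 f -> D f (x + y) = D f x + D f y;
  D_scaler : forall c f x, in_l1 f -> D f (c *: x) = c * D f x;
  D_addl : forall f g x, in_l1 f -> in_l1 g -> D (addf f g) x = D f x + D g x;
  D_scalel : forall c f x, in_l1 f -> D (scalef c f) x = c * D f x;
  D_bounded : exists C : K, forall f x, in_l1 f -> `|D f x| <= C * l1norm f * `|x|;
  D_leibniz : forall f g x, in_l1 f -> in_l1 g ->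
      D (conv f g) x = D g (ra x f) + D f (la g x)
}.

Definition inner_derivation (E : completeNormedModType K)
  (la : (S -> K) -> E -> E) (ra : E -> (S -> K) -> E) (D : (S -> K) -> E -> K) :=
  exists phi : E -> K,
    [/\ forall x y, phi (x + y) = phi x + phi y,
        forall (c : K) x, phi (c *: x) = c * phi x,
        exists C : K, forall x, `|phi x| <= C * `|x| &
        forall f x, in_l1 f -> D f x = phi (ra x f) - phi (la f x)].

Definition amenable_l1 :=
  forall (E : completeNormedModType K) (la : (S -> K) -> E -> E)
    (ra : E -> (S -> K) -> E),
  banach_bimodule la ra ->
  forall D : (S -> K) -> E -> K,
  bounded_derivation la ra D -> inner_derivation la ra D.


End Beurling.

(* Main.v *)
Require Import Defs.
From HB Require Import structures.
From mathcomp Require Import all_boot all_order all_algebra.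
From mathcomp Require Import all_classical all_reals all_analysis.
From mathcomp Require Import finmap complex.
From mathcomp Require Import lra.
Import numFieldTopology.Exports numFieldNormedType.Exports.
Import Order.TTheory GRing.Theory Num.Theory.
Local Open Scope ring_scope.

Local Open Scope complex_scope.
Import ComplexField.Normc ComplexField.
Local Notation Re := complex.Re.
Local Notation Im := complex.Im.
Section C.
Variable R : realType.
Implicit Types z : Cplx R.
Lemma normK z : `|z| = real_complex R (normc z).
Proof. by []. Qed.
Lemma Re_le_normc z : `|Re z| <= normc z.
Proof.
case: z => a b /=; rewrite -sqrtr_sqr ler_wsqrtr // lerDl sqr_ge0 //.
Qed.
Lemma Im_le_normc z : `|Im z| <= normc z.
Proof.
case: z => a b /=; rewrite -sqrtr_sqr ler_wsqrtr // lerDr sqr_ge0 //.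
Qed.
Lemma normc_le_ReIm z : normc z <= `|Re z| + `|Im z|.
Proof.
case: z => a b /=; rewrite -[X in _ <= X]ger0_norm ?addr_ge0 // -sqrtr_sqr.
rewrite ler_wsqrtr // sqrrD !real_normK ?num_real //.
have := mulr_ge0 (normr_ge0 a) (normr_ge0 b); lra.
Qed.
Lemma gtC0 (e : Cplx R) : 0 < e -> e = real_complex R (Re e) /\ 0 < Re e.
Proof.
case: e => a b; rewrite ltcE /= => /andP[/eqP -> ->]; by [].
Qed.
Lemma leC_real (x y : R) : ((real_complex R x : Cplx R) <= real_complex R y) = (x <= y).
Proof. exact: lecR. Qed.
Lemma ltC_real (x y : R) : ((real_complex R x : Cplx R) < real_complex R y) = (x < y).
Proof. exact: ltcR. Qed.
Lemma ReB (x y : Cplx R) : Re (x - y) = Re x - Re y.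
Proof. by case: x; case: y. Qed.
Lemma ImB (x y : Cplx R) : Im (x - y) = Im x - Im y.
Proof. by case: x; case: y. Qed.

Local Notation re := (@complex.Re R).
Local Notation im := (@complex.Im R).
Lemma Cplx_complete (F : set_system (Cplx R)) : ProperFilter F -> cauchy F -> cvg F.
Proof.
move=> PF /cauchyP Fc.
have cRe : cauchy (fmap re F).
  apply: cauchy_exP => eps eps0.
  have e0' : 0 < real_complex R eps by rewrite (_ : 0 = real_complex R 0) // ltC_real.
  have [x Fx] := Fc (real_complex R eps) e0'.
  exists (Re x); rewrite /fmap /=; apply: filterS Fx => y.
  rewrite -!ball_normE /= normK ltC_real => h.
  by apply: le_lt_trans h; rewrite -ReB; apply: Re_le_normc.
have cIm : cauchy (fmap im F).
  apply: cauchy_exP => eps eps0.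
  have e0' : 0 < real_complex R eps by rewrite (_ : 0 = real_complex R 0) // ltC_real.
  have [x Fx] := Fc (real_complex R eps) e0'.
  exists (Im x); rewrite /fmap /=; apply: filterS Fx => y.
  rewrite -!ball_normE /= normK ltC_real => h.
  by apply: le_lt_trans h; rewrite -ImB; apply: Im_le_normc.
have Ha0 : (fmap re F --> lim (fmap re F))%classic by apply: (@cauchy_cvg R).
have Ha := (fcvgrPdist_lt _).1 Ha0.
have Hb0 : (fmap im F --> lim (fmap im F))%classic by apply: (@cauchy_cvg R).
have Hb := (fcvgrPdist_lt _).1 Hb0.
apply/cvg_ex; exists (Complex (lim (fmap re F)) (lim (fmap im F))).
apply/fcvgrPdist_lt => e e0; have [ee er] := gtC0 _ e0.
have e2 : 0 < Re e / 2 by rewrite divr_gt0.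
near=> t.
have h1 : `|lim (fmap re F) - Re t| < Re e / 2 by near: t; exact: Ha.
have h2 : `|lim (fmap im F) - Im t| < Re e / 2 by near: t; exact: Hb.
rewrite ee normK ltC_real; apply: le_lt_trans (normc_le_ReIm _) _.
rewrite ReB ImB /=; lra.
Unshelve. all: by end_near. Qed.
End C.
Definition CC (R : realType) : Type := Num.NumField.sort (Cplx R).
HB.instance Definition _ (R : realType) := NormedModule.copy (CC R) (Num.NumField.sort (Cplx R)).
HB.instance Definition _ (R : realType) := Uniform_isComplete.Build (CC R) (@Cplx_complete R).
Lemma CC_scale (R : realType) (c : Cplx R) (x : CC R) : c *: x = (c * (x : Cplx R) : CC R).
Proof. by []. Qed.
Lemma CC_norm (R : realType) (x : CC R) : `|x| = `|(x : Cplx R)|.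
Proof. by []. Qed.

Close Scope complex_scope.

#[global] Instance totally_filter {I : choiceType} : ProperFilter (@totally I).
Proof.
eapply filter_from_proper; last by move=> A _; exists A; rewrite /= fsubset_refl.
apply: filter_fromT_filter; first by exists fset0.
by move=> A B /=; exists (A `|` B)%fset => P /=; rewrite fsubUset => /andP[].
Qed.

Lemma usum_single {I : choiceType} {K : numFieldType} (x : I -> K) i0 :
  (forall i, i != i0 -> x i = 0) -> usum x = x i0.
Proof.
move=> x0; apply: cvg_lim => //.
apply: cvg_near_cst.
exists [fset i0]%fset => // B /= sB.
have iB : i0 \in B by move/fsubsetP: sB; apply; rewrite inE.
rewrite /partial_sum (big_fsetD1 i0 iB) /= big1_fset ?addr0 // => i.
by rewrite !inE => /andP[ii0 _] _; apply: x0.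
Qed.

Lemma big_split_sub {I : choiceType} {V : zmodType} (A B : {fset I}) (F : I -> V) :
  (A `<=` B)%fset ->
  \sum_(i <- B) F i = \sum_(i <- A) F i + \sum_(i <- [fset i in B | i \notin A]%fset) F i.
Proof.
move=> AB; rewrite (big_fsetID _ (mem A)); congr (_ + _).
apply: eq_fbigl => i; rewrite !inE /=; apply/andP/idP => [[]//|iA]; split => //.
by move/fsubsetP: AB; apply.
Qed.
Arguments big_split_sub {I V A B} F.

Section RealSums.
Variable R : realType.
Local Notation C := (Cplx R).
Local Notation rc := (real_complex R).

Definition ssum {I : choiceType} (a : I -> R) : set R :=
  fun r => exists A : {fset I}, r = \sum_(i <- A) a i.

Lemma has_sup_ssum {I : choiceType} (a : I -> R) M :
  (forall A : {fset I}, \sum_(i <- A) a i <= M) -> has_sup (ssum a).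
Proof.
move=> hM; split; first by exists (\sum_(i <- fset0) a i); exists fset0.
by exists M => y [A ->].
Qed.
Arguments has_sup_ssum {I a M}.

Lemma normc_real (r : R) : normc (rc r : C) = `|r|.
Proof. by rewrite /= expr0n /= addr0 sqrtr_sqr. Qed.

Lemma partial_real {I : choiceType} (a : I -> R) B :
  partial_sum (fun i => rc (a i) : C) B = rc (\sum_(i <- B) a i).
Proof. by rewrite /partial_sum rmorph_sum. Qed.

Lemma cvg_sup_real {I : choiceType} (a : I -> R) M :
  (forall i, 0 <= a i) -> (forall A : {fset I}, \sum_(i <- A) a i <= M) ->
  (partial_sum (fun i => rc (a i) : C) @ totally --> (rc (sup (ssum a)) : C))%classic.
Proof.
move=> a0 hM; have hs := has_sup_ssum hM.
apply/cvgrPdist_lt => e e0; have [ee er] := @gtC0 _ _ e0.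
have [r [A0 ->] hr] := sup_adherent er hs.
exists A0 => // B /= sB.
rewrite partial_real -rmorphB normK normc_real ee ltC_real.
have hB : \sum_(i <- B) a i <= sup (ssum a) by apply: (sup_upper_bound hs); exists B.
have hD : 0 <= \sum_(i <- [fset i in B | i \notin A0]%fset) a i by apply: sumr_ge0.
move: hB; rewrite (big_split_sub a sB) => hB.
rewrite ger0_norm; [lra | lra].
Qed.

Lemma summable_cvg {I : choiceType} (x : I -> C) M :
  (forall A : {fset I}, \sum_(i <- A) normc (x i) <= M) ->
  cvg (partial_sum x @ totally)%classic.
Proof.
move=> hM; apply: Cplx_complete; apply/cauchyP => e e0.
have [ee er] := @gtC0 _ _ e0.
have hs := has_sup_ssum hM.
have [r [A0 ->] hr] := sup_adherent er hs.
exists (partial_sum x A0); exists A0 => // B /= sB.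
rewrite -ball_normE /= /partial_sum (big_split_sub x sB) opprD addrA subrr add0r normrN.
apply: le_lt_trans (ler_norm_sum _ _ _) _.
under eq_bigr do rewrite normK.
rewrite -rmorph_sum ee ltC_real.
have hB : \sum_(i <- B) normc (x i) <= sup (ssum (fun i => normc (x i))).
  by apply: (sup_upper_bound hs); exists B.
move: hB; rewrite (big_split_sub _ sB) => hB; lra.
Qed.

Lemma usum_sup_real {I : choiceType} (a : I -> R) M :
  (forall i, 0 <= a i) -> (forall A : {fset I}, \sum_(i <- A) a i <= M) ->
  usum (fun i => rc (a i) : C) = (rc (sup (ssum a)) : C).
Proof. by move=> a0 hM; apply: cvg_lim => //; apply: cvg_sup_real a0 hM. Qed.


Lemma usum_cvg {I : choiceType} (x : I -> C) M :
  (forall A : {fset I}, \sum_(i <- A) normc (x i) <= M) ->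
  (partial_sum x @ totally --> usum x)%classic.
Proof. by move=> h; apply: summable_cvg h. Qed.
Arguments usum_cvg {I x M}.

Lemma norm_usum_le {I : choiceType} (x : I -> C) (a : I -> R) M :
  (forall i, normc (x i) <= a i) -> (forall A : {fset I}, \sum_(i <- A) a i <= M) ->
  normc (usum x) <= sup (ssum a).
Proof.
move=> xa hM.
have hM' : forall A : {fset I}, \sum_(i <- A) normc (x i) <= M.
  by move=> A; apply: le_trans (hM A); apply: ler_sum => i _; apply: xa.
have cx := usum_cvg hM'.
have hs := has_sup_ssum hM.
case: (leP (normc (usum x)) (sup (ssum a))) => // hlt.
pose eps := normc (usum x) - sup (ssum a).
have e0 : 0 < rc eps :> C by rewrite (_ : 0 = rc 0) // ltC_real subr_gt0.
move/cvgrPdist_lt: cx => /(_ _ e0) [A0 _ hA].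
have /= h1 := hA A0 (fsubset_refl A0).
rewrite normK ltC_real in h1.
have h2 : normc (partial_sum x A0) <= \sum_(i <- A0) a i.
  apply: (@le_trans _ _ (\sum_(i <- A0) normc (x i))); last by apply: ler_sum => i _; exact: xa.
  have : `|partial_sum x A0| <= \sum_(i <- A0) `|x i| by apply: ler_norm_sum.
  by under eq_bigr do rewrite normK; rewrite -rmorph_sum normK leC_real.
have h3 : \sum_(i <- A0) a i <= sup (ssum a) by apply: (sup_upper_bound hs); exists A0.
have := ler_normD (usum x - partial_sum x A0) (partial_sum x A0).
rewrite subrK !normK -rmorphD leC_real => h4.
rewrite /eps in h1; move: h1 h2 h3 h4.
set u := normc (usum x - _); set v := normc (partial_sum x A0); set w := normc (usum x).
set s1 := \sum_(i <- A0) a i; set s2 := sup _.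
clear; move=> h1 h2 h3 h4; lra.
Qed.

Lemma usum_fiber {I J : choiceType} (x : I -> C) (L k : C) (c : pred J) (h : J -> I)
    (sec : I -> J) :
  (partial_sum x @ totally --> L)%classic ->
  (forall i, c (sec i) /\ h (sec i) = i) -> {in c &, injective h} ->
  usum (fun j => if c j then x (h j) * k else 0) = L * k.
Proof.
move=> cx hsec hinj; apply: cvg_lim; first exact: norm_hausdorff.
pose pi := fun B : {fset J} => (h @` [fset j in B | c j])%fset.
have E : partial_sum (fun j => if c j then x (h j) * k else 0) =
    (fun B => partial_sum x (pi B) * k).
  apply: funext => B; rewrite /partial_sum /pi mulr_suml big_imfset /=.
    by rewrite -big_fset_condE -big_mkcond.
    by move=> j1 j2; rewrite !inE => /andP[_ c1] /andP[_ c2]; apply: hinj.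
rewrite E; apply: cvgMr_tmp.
apply: (cvg_comp pi (partial_sum x) _ cx).
move=> P [A _ hA]; exists (sec @` A)%fset => // B /= sB; apply: hA => /=.
apply/fsubsetP => a aA; apply/imfsetP; exists (sec a); last by rewrite (hsec a).2.
rewrite !inE /=; apply/andP; split; last exact: (hsec a).1.
by move/fsubsetP: sB; apply; apply/imfsetP; exists a.
Qed.

End RealSums.


Lemma abs_bound {K : numFieldType} {a k b : K} :
  0 <= a -> a <= k * b -> 0 <= b -> a <= `|k| * b.
Proof.
move=> a0 ak b0; have kb0 : 0 <= k * b by apply: le_trans ak.
by rewrite -(ger0_norm b0) -normrM ger0_norm.
Qed.

Section Unital.
Variables (K : numFieldType) (S : choiceType) (op : S -> S -> S) (w : S -> K).
Variables (E : completeNormedModType K) (la : (S -> K) -> E -> E)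
  (ra : E -> (S -> K) -> E) (D : (S -> K) -> E -> K) (e : S -> K).
Hypotheses (hB : banach_bimodule op w la ra) (hD : bounded_derivation op w la ra D)
  (he : in_l1 w e) (hee : Defs.conv op e e = e)
  (hsc : forall f, in_l1 w f -> exists c, f = scalef c e).

Lemma unital_inner : inner_derivation w la ra D.
Proof.
pose a x := ra x e; pose b x := la e x; pose d := D e.
have aa x : a (a x) = a x by rewrite /a -(ra_assoc hB) // hee.
have bb x : b (b x) = b x by rewrite /b -(la_assoc hB) // hee.
have ab x : a (b x) = b (a x) by rewrite /a /b (lra_assoc hB).
have dd y : d y = d (a y) + d (b y).
  by rewrite /d {1}(_ : e = Defs.conv op e e) // (D_leibniz hD).
have dba x : d (b (a x)) = 0.
  have h := dd (a x); rewrite aa in h.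
  by apply: (addrI (d (a x))); rewrite addr0 -h.
pose phi x := d (a x) - d (b x).
have phiD x y : phi (x + y) = phi x + phi y.
  rewrite /phi /a /b /d (ra_addl hB) // (la_addr hB) // !(D_addr hD) //.
  by rewrite opprD addrACA.
have phiZ c x : phi (c *: x) = c * phi x.
  by rewrite /phi /a /b /d (ra_scalel hB) // (la_scaler hB) // !(D_scaler hD) // mulrBr.
exists phi; split => //.
- have [Cd hCd] := D_bounded hD; have [Cl hCl] := la_bounded hB.
  have [Cr hCr] := ra_bounded hB.
  pose ne := l1norm w e.
  exists (`|Cd * ne| * `|Cr * ne| + `|Cd * ne| * `|Cl * ne|) => x.
  rewrite /phi mulrDl; apply: le_trans (ler_normB _ _) _.
  apply: lerD.
  + apply: le_trans (abs_bound (normr_ge0 _) (hCd _ _ he) (normr_ge0 _)) _.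
    rewrite -mulrA ler_wpM2l //; apply: abs_bound => //; exact: hCr.
  + apply: le_trans (abs_bound (normr_ge0 _) (hCd _ _ he) (normr_ge0 _)) _.
    rewrite -mulrA ler_wpM2l //; apply: abs_bound => //; exact: hCl.
- move=> f x hf; have [c ->] := hsc _ hf.
  rewrite (D_scalel hD) // (ra_scaler hB) // (la_scalel hB) // !phiZ -mulrBr.
  congr (_ * _); rewrite /phi -/(a x) -/(b x) aa bb ab dba.
  by rewrite -/(d x) (dd x) subr0 sub0r opprK.
Qed.
End Unital.


Lemma normc_ge0 (R : realType) (z : Cplx R) : 0 <= normc z.
Proof. by case: z => a b; exact: sqrtr_ge0. Qed.

Section Main.
Variables (R : realType) (S : choiceType) (op : S -> S -> S) (w : S -> R).
Local Notation C := (Cplx R).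
Local Notation rc := (real_complex R).
Local Notation W := (fun s => (Complex (w s) 0 : Cplx R)).
Hypothesis wpos : forall s, 0 < w s.
Hypothesis w1 : forall s, 1 <= w s.

Let a (f : S -> C) := fun i => normc (f i) * w i.

Lemma sumW (f : S -> C) (A : {fset S}) :
  \sum_(i <- A) `|f i| * W i = rc (\sum_(i <- A) a f i).
Proof. by rewrite rmorph_sum; apply: eq_bigr => i _; rewrite normK rmorphM. Qed.

Lemma l1_real {f} : in_l1 W f -> exists M : R, forall A : {fset S}, \sum_(i <- A) a f i <= M.
Proof.
case=> M hM; exists (Re M) => A; have := hM A.
by rewrite sumW lecE => /andP[_].
Qed.

Lemma a_ge0 f i : 0 <= a f i.
Proof. by rewrite /a mulr_ge0 ?normc_ge0 // ltW. Qed.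

Lemma l1_cvg {f} : in_l1 W f -> (partial_sum f @ totally --> usum f)%classic.
Proof.
move=> /l1_real [M hM]; apply: (@usum_cvg _ _ _ M) => A.
apply: le_trans (hM A); apply: ler_sum => i _.
by rewrite /a ler_peMr ?normc_ge0.
Qed.

Lemma l1norm_eq {f} : in_l1 W f -> l1norm W f = rc (sup (@ssum R _ (a f))).
Proof.
move=> /l1_real [M hM]; rewrite /l1norm.
rewrite (_ : (fun s => `|f s| * W s) = fun s => rc (a f s)); last first.
  by apply: funext => s; rewrite normK rmorphM.
exact: (@usum_sup_real _ _ _ M (a_ge0 f) hM).
Qed.

Lemma norm_usum f : in_l1 W f -> `|usum f| <= l1norm W f.
Proof.
move=> hf; rewrite (l1norm_eq hf) normK leC_real.
have [M hM] := l1_real hf.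
apply: (@norm_usum_le _ _ _ _ M) => // i.
by rewrite /a ler_peMr ?normc_ge0.
Qed.

Lemma norm_pt f s : in_l1 W f -> `|f s| * W s <= l1norm W f.
Proof.
move=> hf; rewrite (l1norm_eq hf) normK -rmorphM leC_real.
have [M hM] := l1_real hf.
have hs := @has_sup_ssum R _ _ _ hM.
apply: (sup_upper_bound hs); exists [fset s]%fset.
by rewrite big_seq_fset1.
Qed.

Lemma usum_add f g : in_l1 W f -> in_l1 W g -> usum (Defs.addf f g) = usum f + usum g.
Proof.
move=> /l1_cvg hf /l1_cvg hg; apply: cvg_lim; first exact: norm_hausdorff.
have -> : partial_sum (Defs.addf f g) = (partial_sum f + partial_sum g)%R.
  by apply: funext => B; rewrite /partial_sum /Defs.addf big_split.
exact: (cvgD hf hg).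
Qed.

Lemma usum_scale c f : in_l1 W f -> usum (scalef c f) = c * usum f.
Proof.
move=> /l1_cvg hf; apply: cvg_lim; first exact: norm_hausdorff.
have -> : partial_sum (scalef c f) = (fun B => c * partial_sum f B).
  by apply: funext => B; rewrite /partial_sum /scalef mulr_sumr.
apply: cvgMl_tmp; exact: hf.
Qed.

Definition delta (s : S) : S -> C := fun t => if t == s then 1 else 0.

Lemma usum_delta s : usum (delta s) = 1.
Proof.
rewrite (@usum_single _ _ _ s); first by rewrite /delta eqxx.
by move=> i /negbTE; rewrite /delta => ->.
Qed.

Lemma in_l1_delta s : in_l1 W (delta s).
Proof.
exists (W s) => A.
case: (boolP (s \in A)) => sA.
  rewrite (big_fsetD1 s sA) /= big1_fset.
    by rewrite /delta eqxx normr1 mul1r addr0.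
  by move=> i; rewrite !inE /delta => /andP[/negbTE -> _] _; rewrite normr0 mul0r.
rewrite big1_fset; first by rewrite (_ : 0 = rc 0) // leC_real ltW.
move=> i iA _; rewrite /delta; case: eqP => [e|_]; last by rewrite normr0 mul0r.
by move: iA; rewrite e (negbTE sA).
Qed.


Lemma conv_rz (hr : right_zero_sg op) f g : in_l1 W f ->
  Defs.conv op f g = fun u => usum f * g u.
Proof.
move=> hf; apply: funext => u; rewrite /Defs.conv.
rewrite (_ : (fun p : S * S => _) = fun p => if p.2 == u then f p.1 * g u else 0); last first.
  by apply: funext => -[s t] /=; rewrite hr; case: eqP => // ->.
apply: (@usum_fiber R _ _ f (usum f) (g u) (fun p => p.2 == u) fst (fun a => (a, u))).
- exact: l1_cvg.
- by move=> i; rewrite /= eqxx.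
- move=> [s1 t1] [s2 t2]; rewrite /in_mem /= => /eqP -> /eqP -> /= ->; done.
Qed.

Lemma conv_lz (hl : left_zero_sg op) f g : in_l1 W g ->
  Defs.conv op f g = fun u => f u * usum g.
Proof.
move=> hg; apply: funext => u; rewrite /Defs.conv.
rewrite (_ : (fun p : S * S => _) = fun p => if p.1 == u then g p.2 * f u else 0); last first.
  by apply: funext => -[s t] /=; rewrite hl; case: eqP => // ->; rewrite mulrC.
rewrite (@usum_fiber R _ _ g (usum g) (f u) (fun p => p.1 == u) snd (fun a => (u, a))).
- exact: mulrC.
- exact: l1_cvg.
- by move=> i; rewrite /= eqxx.
- move=> [s1 t1] [s2 t2]; rewrite /in_mem /= => /eqP -> /eqP -> /= ->; done.
Qed.

Lemma W_gt0 s : 0 < W s.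
Proof. by rewrite (_ : 0 = rc 0) // ltC_real. Qed.

Lemma not_amenable_rz (hr : right_zero_sg op) (s0 s1 : S) : s1 != s0 -> ~ amenable_l1 op W.
Proof.
move=> ns hA.
pose E := CC R.
pose la := fun (f : S -> C) (x : E) => (0 : E).
pose ra := fun (x : E) (f : S -> C) => (usum f * (x : C) : E).
pose D := fun (f : S -> C) (x : E) => f s1 * (x : C).
have hB : banach_bimodule op W la ra.
  split.
  - by move=> *; rewrite /la addr0.
  - by move=> *; rewrite /la scaler0.
  - by move=> *; rewrite /la addr0.
  - by move=> *; rewrite /la scaler0.
  - by move=> f g x hf hg; rewrite /ra usum_add // mulrDl.
  - by move=> c f x hf; rewrite /ra usum_scale // -mulrA.
  - by move=> f x y hf; rewrite /ra mulrDr.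
  - by move=> c f x hf; rewrite /ra mulrCA.
  - by [].
  - move=> f g x hf hg; rewrite /ra (conv_rz hr) //.
    rewrite (_ : (fun u => usum f * g u) = scalef (usum f) g) // usum_scale //.
    by rewrite mulrCA mulrA.
  - by move=> f g x hf hg; rewrite /ra /la mulr0.
  - by exists 0 => f x _; rewrite /la normr0 !mul0r.
  - exists 1 => f x hf; rewrite /ra mul1r CC_norm normrM.
    by apply: ler_wpM2r => //; exact: norm_usum.
have hD : bounded_derivation op W la ra D.
  split.
  - by move=> f x y hf; rewrite /D mulrDr.
  - by move=> c f x hf; rewrite /D mulrCA.
  - by move=> f g x hf hg; rewrite /D /Defs.addf mulrDl.
  - by move=> c f x hf; rewrite /D /scalef mulrA.
  - exists (W s1)^-1 => f x hf; rewrite /D CC_norm normrM.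
    apply: ler_wpM2r => //; rewrite mulrC ler_pdivlMr ?W_gt0 //.
    exact: norm_pt.
  - move=> f g x hf hg; rewrite /D /ra /la (conv_rz hr) //= mulr0 addr0.
    by rewrite mulrCA mulrA.
have [phi [_ _ _ hphi]] := hA E la ra hB D hD.
have h1 := hphi _ (1 : C) (in_l1_delta s1).
have h0 := hphi _ (1 : C) (in_l1_delta s0).
rewrite /D /ra /la !usum_delta /delta eqxx in h1.
rewrite /D /ra /la !usum_delta /delta (negbTE ns) in h0.
move: h1; rewrite -h0 !mulr1 => /eqP; rewrite oner_eq0.
done.
Qed.

Lemma not_amenable_lz (hl : left_zero_sg op) (s0 s1 : S) : s1 != s0 -> ~ amenable_l1 op W.
Proof.
move=> ns hA.
pose E := CC R.
pose la := fun (f : S -> C) (x : E) => (usum f * (x : C) : E).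
pose ra := fun (x : E) (f : S -> C) => (0 : E).
pose D := fun (f : S -> C) (x : E) => f s1 * (x : C).
have hB : banach_bimodule op W la ra.
  split.
  - by move=> f g x hf hg; rewrite /la usum_add // mulrDl.
  - by move=> c f x hf; rewrite /la usum_scale // -mulrA.
  - by move=> f x y hf; rewrite /la mulrDr.
  - by move=> c f x hf; rewrite /la mulrCA.
  - by move=> *; rewrite /ra addr0.
  - by move=> *; rewrite /ra scaler0.
  - by move=> *; rewrite /ra addr0.
  - by move=> *; rewrite /ra scaler0.
  - move=> f g x hf hg; rewrite /la (conv_lz hl) //.
    rewrite (_ : (fun u => f u * usum g) = scalef (usum g) f); last first.
      by apply: funext => u; rewrite /scalef mulrC.
    by rewrite usum_scale // mulrCA mulrA.
  - by [].
  - by move=> f g x hf hg; rewrite /ra /la mulr0.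
  - exists 1 => f x hf; rewrite /la mul1r CC_norm normrM.
    by apply: ler_wpM2r => //; exact: norm_usum.
  - by exists 0 => f x _; rewrite /ra normr0 !mul0r.
have hD : bounded_derivation op W la ra D.
  split.
  - by move=> f x y hf; rewrite /D mulrDr.
  - by move=> c f x hf; rewrite /D mulrCA.
  - by move=> f g x hf hg; rewrite /D /Defs.addf mulrDl.
  - by move=> c f x hf; rewrite /D /scalef mulrA.
  - exists (W s1)^-1 => f x hf; rewrite /D CC_norm normrM.
    apply: ler_wpM2r => //; rewrite mulrC ler_pdivlMr ?W_gt0 //.
    exact: norm_pt.
  - move=> f g x hf hg; rewrite /D /ra /la (conv_lz hl) //= mulr0 add0r.
    by rewrite mulrA.
have [phi [_ _ _ hphi]] := hA E la ra hB D hD.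
have h1 := hphi _ (1 : C) (in_l1_delta s1).
have h0 := hphi _ (1 : C) (in_l1_delta s0).
rewrite /D /ra /la !usum_delta /delta eqxx in h1.
rewrite /D /ra /la !usum_delta /delta (negbTE ns) in h0.
move: h1; rewrite -h0 !mulr1 => /eqP; rewrite oner_eq0.
done.
Qed.
End Main.


Theorem proposition2p5 (R : realType) (S : choiceType) (op : S -> S -> S)
    (w : S -> R) :
  associative op ->
  (left_zero_sg op \/ right_zero_sg op) ->
  is_weight op w ->
  (exists s : S, True) ->
  (amenable_l1 (K := Cplx R) op (fun s => (Complex (w s) 0 : Cplx R))
    <-> exists s0 : S, forall s : S, s = s0).
Proof.
move=> hassoc hlr [wpos wsub] [s0 _].
have w1 : forall s, 1 <= w s.
  case: hlr => h s.
  - have := wsub s0 s; rewrite h => hh.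
    by rewrite -(ler_pM2l (wpos s0)) mulr1.
  - have := wsub s s0; rewrite h => hh.
    by rewrite -(ler_pM2r (wpos s0)) mul1r.
split.
- move=> hA; case: (pselect (exists s1 : S, forall s, s = s1)) => // hn.
  exfalso.
  case: (pselect (exists s1 : S, s1 != s0)) => [[s1 ns]|hn2]; last first.
    apply: hn; exists s0 => s; apply/eqP; apply/negPn/negP => h; apply: hn2.
    by exists s.
  case: hlr => h.
  + exact: (@not_amenable_lz R S op w wpos w1 h s0 s1 ns hA).
  + exact: (@not_amenable_rz R S op w wpos w1 h s0 s1 ns hA).
- move=> [s1 hs] E la ra hB D hD.
  apply: (@unital_inner _ _ op _ E la ra D (fun _ => 1) hB hD).
  + exists (Complex (w s1) 0 : Cplx R) => A.
    have : (A `<=` [fset s1])%fset.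
      by apply/fsubsetP => x _; rewrite (hs x) inE.
    rewrite fsubset1 => /orP[/eqP -> | /eqP ->].
    * by rewrite big_seq_fset1 normr1 mul1r.
    * by rewrite big_seq_fset0 ltW // (@W_gt0 R S w wpos).
  + apply: funext => u; rewrite /Defs.conv (@usum_single _ _ _ (s1, s1)).
      by rewrite /= (hs (op s1 s1)) (hs u) eqxx mulr1.
    by move=> [a b]; rewrite (hs a) (hs b) eqxx.
  + move=> f _; exists (f s1); apply: funext => s.
    by rewrite /scalef mulr1 (hs s).
Qed.
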